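(* Let $s\ge1$ be an integer and let $(G,Z)$ be a plantation. Then there is a dyadic plantation $(G',Z')$ with $|G'|\le|G|$ and $|Z'|\le|Z|$ such that $n(G,Z)\le n(G',Z')$.
   Context: Graphs are finite and simple; $|G|$ is the number of vertices. Two subgraphs are anticomplete if their vertex sets are disjoint and no edge joins them. $G$ is $s\mathcal{O}$-free if no $s$ cycles of $G$ are pairwise vertex-disjoint and pairwise anticomplete. $Z\subseteq V(G)$ is cycle-hitting if every cycle of $G$ has a vertex in $Z$. A plantation is a pair $(G,Z)$ with $G$ an $s\mathcal{O}$-free graph and $Z$ cycle-hitting. $(G,Z)$ is dyadic if $Z$ is stable and every vertex of $V(G)\setminus Z$ has at most two neighbours in $Z$. $n(G,Z)$ denotes the number of induced paths $P$ of $G$ with $Z\subseteq V(P)$ and both ends of $P$ in $Z$. *)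

(* Defs.v *)
(* Simple graphs: a symmetric irreflexive relation e on a finType T. *)
From mathcomp Require Import all_boot.
Set Implicit Arguments. Unset Strict Implicit. Unset Printing Implicit Defensive.

Section Graphs.
Variables (T : finType) (e : rel T).

(* A cycle of G, given by its cyclic vertex sequence: at least 3 distinct
   vertices, consecutive ones (and last/first) adjacent.  Not necessarily induced. *)
Definition is_cycle (c : seq T) : bool :=
  [&& uniq c, 2 < size c & cycle e c].

Definition anticomplete (A B : seq T) : Prop :=
  forall x y, x \in A -> y \in B -> x != y /\ ~~ e x y.

Definition sO_free (s : nat) : Prop :=
  ~ exists C : 'I_s -> seq T,
      (forall i, is_cycle (C i)) /\
      (forall i j, i != j -> anticomplete (C i) (C j)).

Definition cycle_hitting (Z : {set T}) : Prop :=
  forall c, is_cycle c -> exists2 z, z \in Z & z \in c.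

Definition plantation (s : nat) (Z : {set T}) : Prop :=
  sO_free s /\ cycle_hitting Z.

Definition stable (Z : {set T}) : Prop :=
  forall x y, x \in Z -> y \in Z -> ~~ e x y.

Definition dyadic (Z : {set T}) : Prop :=
  stable Z /\ forall v, v \notin Z -> #|[set z in Z | e v z]| <= 2.

Definition ends_in (Z : {set T}) (p : seq T) : bool :=
  if p is x :: r then (x \in Z) && (last x r \in Z) else false.

(* An induced path is an induced
   subgraph, hence determined by its vertex set. *)
Definition ind_path_through (Z : {set T}) (X : {set T}) : bool :=
  [exists t : #|X|.-tuple T,
    [&& uniq t, [set x in t] == X, ends_in Z t, Z \subset X &
     [forall i : 'I_#|X|, forall j : 'I_#|X|,
        e (tnth t i) (tnth t j) == ((i.+1 == j :> nat) || (j.+1 == i :> nat))]]].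

Definition n_paths (Z : {set T}) : nat :=
  #|[set X : {set T} | ind_path_through Z X]|.

End Graphs.

(* Main.v *)
Require Import Defs.
From mathcomp Require Import all_boot.
From mathcomp Require Import zify.
Set Implicit Arguments. Unset Strict Implicit. Unset Printing Implicit Defensive.

Section S.
Variable T : finType.

Definition adjn (i j : nat) := (i.+1 == j) || (j.+1 == i).

Definition IPs (r : rel T) (Z X : {set T}) (x0 : T) (t : seq T) :=
 [/\ uniq t, [set x in t] = X, ends_in Z t, Z \subset X &
   forall i j, i < size t -> j < size t -> r (nth x0 t i) (nth x0 t j) = adjn i j].

Lemma ipt_IPs r Z X x0 : ind_path_through r Z X -> exists t, IPs r Z X x0 t.
Proof.
move/existsP=> [t /and5P[u /eqP hs he hz /forallP hf]].
exists (tval t); split => //.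
move=> i j hi hj. rewrite size_tuple in hi hj.
have := forallP (hf (Ordinal hi)) (Ordinal hj). by rewrite !(tnth_nth x0) /= => /eqP ->.
Qed.

Lemma IPs_ipt r Z X x0 t : IPs r Z X x0 t -> ind_path_through r Z X.
Proof.
case=> u hs he hz hf.
have sz : size t == #|X| by rewrite -hs cardsE (card_uniqP u).
apply/existsP; exists (Tuple sz). rewrite /= u hs eqxx he hz /=.
apply/forallP=> i; apply/forallP=> j. rewrite !(tnth_nth x0) /= hf //.
- by rewrite (eqP sz).
- by rewrite (eqP sz).
Qed.

Lemma ends_inE (Z : {set T}) (x0 : T) t : ends_in Z t =
  [&& 0 < size t, nth x0 t 0 \in Z & nth x0 t (size t).-1 \in Z].
Proof.
case: t => [|x r] //=. have := nth_last x0 (x :: r). rewrite /= => ->. by [].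
Qed.

Lemma IPs_rev r Z X x0 t : IPs r Z X x0 t -> IPs r Z X x0 (rev t).
Proof.
case=> u hs he hz hf; split => //.
- by rewrite rev_uniq.
- by rewrite -hs; apply/setP => x; rewrite !inE mem_rev.
- move: he; rewrite !(ends_inE _ x0) size_rev => /and3P[h0 h1 h2].
  rewrite h0 !nth_rev //; last by rewrite prednK.
  by rewrite prednK // subnn subn1 h1 h2.
- move=> i j hi hj; rewrite size_rev in hi hj. rewrite !nth_rev // hf; try lia.
  rewrite /adjn; apply/orP/orP; lia.
Qed.


Lemma cycle_avoid (r : rel T) c v : (forall y, r v y = false) -> cycle r c -> v \notin c.
Proof.
move=> hv hc; apply/negP => hin. by have := next_cycle hc hin; rewrite hv.
Qed.

Lemma memneq (x y : T) (s : seq T) : x \in s -> y \notin s -> x != y.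
Proof. by move=> hx hy; apply/eqP => h; subst; rewrite hx in hy. Qed.

Definition gfun (m i : nat) := if i <= m then i else i.+1.

Lemma adj_g m i j : i != m -> j != m -> adjn (gfun m i) (gfun m j) = adjn i j.
Proof. rewrite /adjn /gfun => hi hj; case: leqP => ?; case: leqP => ?; apply/orP/orP; lia. Qed.

Lemma adj_gm m j : j != m -> adjn m (gfun m j) || adjn m.+1 (gfun m j) = adjn m j.
Proof. rewrite /adjn /gfun => hj; case: leqP => ?; apply/orP/orP; lia. Qed.

Lemma g_inv m k : k != m.+1 -> gfun m (if k <= m then k else k.-1) = k.
Proof.
move=> h; rewrite /gfun; case: (leqP k m) => h1; first by rewrite h1.
case: (leqP k.-1 m) => h2; lia.
Qed.

Lemma adjnn m : adjn m m = false.
Proof. by rewrite /adjn; apply/negbTE/negP => /orP; lia. Qed.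

Lemma adjnC i j : adjn i j = adjn j i.
Proof. by rewrite /adjn orbC. Qed.

Lemma ipt_sub r (Z X : {set T}) : ind_path_through r Z X -> Z \subset X.
Proof. by move/existsP => [t /and5P[_ _ _ h _]]. Qed.

Lemma arith1 p q : 2 < q.+2 -> 0 < p -> 2 < p + q.+1.
Proof. lia. Qed.

Section Contr.
Variables (e : rel T) (esym : symmetric e) (eirr : irreflexive e).
Variables (Z : {set T}) (z1 z2 : T) (hz1 : z1 \in Z) (hz2 : z2 \in Z) (h12 : e z1 z2).

Definition ctr : rel T := fun x y =>
  [&& x != z2, y != z2, x != y &
     e x y || ((x == z1) && e z2 y) || ((y == z1) && e x z2)].

Lemma z12 : z1 != z2.
Proof. by apply/eqP => h; move: h12; rewrite h eirr. Qed.

Lemma ctr_sym : symmetric ctr.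
Proof.
move=> x y; rewrite /ctr (eq_sym y x) (esym y x) (esym z2 x) (esym y z2).
by case: (x == z1); case: (y == z1); case: (e x y); case: (e z2 y); case: (e x z2);
  case: (x != z2); case: (y != z2); case: (x != y).
Qed.

Lemma ctr_irr : irreflexive ctr.
Proof. by move=> x; rewrite /ctr eqxx /= !andbF. Qed.

Lemma ctr_z2 y : ctr z2 y = false.
Proof. by rewrite /ctr eqxx. Qed.

Lemma ctr_eq x y : x != z1 -> y != z1 -> x != z2 -> y != z2 -> ctr x y = e x y.
Proof.
move=> h1 h2 h3 h4; rewrite /ctr h3 h4 (negbTE h1) (negbTE h2) /= /=.
by case: (eqVneq x y) => [->|]; rewrite ?eirr ?andbF ?orbF. 
Qed.

Lemma ctr_z1 y : y != z1 -> y != z2 -> ctr z1 y = e z1 y || e z2 y.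
Proof.
move=> h1 h2; rewrite /ctr z12 h2 eq_sym h1 eqxx (negbTE h1) /=.
by rewrite orbF.
Qed.

Lemma ctr_cyc_z2 c : cycle ctr c -> z2 \notin c.
Proof. by apply: cycle_avoid; exact: ctr_z2. Qed.

Lemma ctr_cycle_e c : cycle ctr c -> z1 \notin c -> cycle e c.
Proof.
move=> hc h1; have h2 := ctr_cyc_z2 hc.
rewrite -(@eq_in_cycle _ [pred x | (x != z1) && (x != z2)] ctr e) //.
- move=> x y /andP[a b] /andP[c0 d]; exact: ctr_eq.
- apply/allP => x hx /=. apply/andP; split; apply/negP => /eqP hh; subst x.
  + by rewrite hx in h1.
  + by rewrite hx in h2.
Qed.


Lemma lift_cycle c : is_cycle ctr c -> z1 \in c ->
  exists L, is_cycle e L /\ forall x, x \in L -> (x \in c) || (x == z2).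
Proof.
move=> /and3P[u sz cy] h1.
case: (rot_to h1) => k r hrot.
have u0 : uniq (z1 :: r) by rewrite -hrot rot_uniq.
have cy0 : cycle ctr (z1 :: r) by rewrite -hrot rot_cycle.
have sz0 : 2 < size (z1 :: r) by rewrite -hrot size_rot.
have mem0 : forall x, x \in z1 :: r -> x \in c by move=> x; rewrite -hrot mem_rot.
have nz2 : z2 \notin z1 :: r by rewrite -hrot mem_rot; exact: ctr_cyc_z2.
clear hrot; case: r u0 cy0 sz0 mem0 nz2 => [|a r1] // u0 cy0 sz0 mem0 nz2.
move: cy0; rewrite /= rcons_path => /andP[ea /andP[pr eb]].
set b := last a r1 in eb.
have nz1 : z1 \notin a :: r1 by case/andP: u0.
have nz2' : z2 \notin a :: r1 by move: nz2; rewrite in_cons negb_or => /andP[].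
have hall : all [pred x | (x != z1) && (x != z2)] (a :: r1).
  apply/allP => x hx /=; apply/andP; split; exact: memneq hx _.
have hP : {in [pred x | (x != z1) && (x != z2)] &, e =2 ctr}.
  by move=> x y /andP[p1 p2] /andP[p3 p4]; rewrite ctr_eq.
have pe : path e a r1 by rewrite (@eq_in_path _ _ e ctr hP a r1 hall).
have bin : b \in a :: r1 by exact: mem_last.
have az1 : a != z1 by apply: memneq nz1; exact: mem_head.
have az2 : a != z2 by apply: memneq nz2'; exact: mem_head.
have bz1 : b != z1 by exact: memneq nz1.
have bz2 : b != z2 by exact: memneq nz2'.
rewrite ctr_z1 // in ea. rewrite ctr_sym ctr_z1 // in eb.
have key : forall x h1, path e x h1 -> e (last x h1) a -> e b x ->
    cycle e (x :: h1 ++ a :: r1).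
  move=> x h1' p1 l1 bx. by rewrite /= rcons_cat /= cat_path p1 /= l1 rcons_path pe bx.
have fin : forall h, uniq h -> {subset h <= [:: z1; z2]} -> 0 < size h ->
    cycle e (h ++ a :: r1) -> exists L, is_cycle e L /\ forall x, x \in L -> (x \in c) || (x == z2).
  move=> h uh sh szh ch; exists (h ++ a :: r1); split.
  - have ua : uniq (a :: r1) by case/andP: u0.
    have hn : ~~ has (mem h) (a :: r1).
      apply/hasPn => x hx /=. apply/negP => hxh. have := sh x hxh.
      rewrite !inE => /orP[] /eqP hh; subst x.
      + by rewrite hx in nz1.
      + by rewrite hx in nz2'.
    rewrite /is_cycle ch cat_uniq uh ua hn size_cat /= andbT.
    move: sz0 szh => /=. exact: arith1.
  - move=> x; rewrite mem_cat => /orP[hxh | hx].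
    + have := sh x hxh; rewrite !inE => /orP[] /eqP ->; rewrite ?eqxx ?orbT //.
      by rewrite h1.
    + by rewrite mem0 // in_cons hx orbT.
case/orP: ea => ea; case/orP: eb => eb.
- have S : {subset [:: z1] <= [:: z1; z2]} by move=> x; rewrite !inE => ->.
  apply: (fin _ _ S) => //.
  apply: (key z1 [::]) => //. by rewrite esym.
- have U : uniq [:: z2; z1] by rewrite /= inE eq_sym z12.
  have S : {subset [:: z2; z1] <= [:: z1; z2]}.
    by move=> x; rewrite !inE => /orP[] ->; rewrite ?orbT.
  apply: (fin _ U S) => //.
  apply: (key z2 [:: z1]); [by rewrite /= esym h12 | by [] | by rewrite esym].
- have U : uniq [:: z1; z2] by rewrite /= inE z12.
  have S : {subset [:: z1; z2] <= [:: z1; z2]} by [].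
  apply: (fin _ U S) => //.
  apply: (key z1 [:: z2]); [by rewrite /= h12 | by [] | by rewrite esym].
- have S : {subset [:: z2] <= [:: z1; z2]}.
    by move=> x; rewrite !inE => ->; rewrite orbT.
  apply: (fin _ _ S) => //.
  apply: (key z2 [::]) => //. by rewrite esym.
Qed.


Lemma ctr_sO s : sO_free e s -> sO_free ctr s.
Proof.
move=> hF [C [hC hA]]; apply: hF.
have nz2 : forall i, z2 \notin C i by move=> i; case/and3P: (hC i) => _ _ /ctr_cyc_z2.
case: (pickP (fun i => z1 \in C i)) => [i0 hi0 | hno].
- have [L [hL hLm]] := lift_cycle (hC i0) hi0.
  have nz1 : forall j, j != i0 -> z1 \notin C j.
    move=> j ne; apply/negP => hj.
    have ne' : i0 != j by rewrite eq_sym.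
    by have [] := hA i0 j ne' z1 z1 hi0 hj; rewrite eqxx.
  have acL : forall j x y, j != i0 -> (x \in C i0) || (x == z2) -> y \in C j ->
      x != y /\ ~~ e x y.
    move=> j x y ne hx hy.
    have ne' : i0 != j by rewrite eq_sym.
    have yz1 : y != z1 by exact: memneq (nz1 j ne).
    have yz2 : y != z2 by exact: memneq (nz2 j).
    have [_ n1] := hA i0 j ne' z1 y hi0 hy.
    rewrite ctr_z1 // negb_or in n1. case/andP: n1 => n1 n2.
    case/orP: hx => [hx | /eqP ->].
    + have [d nxy] := hA i0 j ne' x y hx hy. split => //.
      case: (eqVneq x z1) => [-> //| xz1].
      by rewrite -ctr_eq // (memneq hx (nz2 i0)).
    + by split => //; rewrite eq_sym.
  exists (fun i => if i == i0 then L else C i); split.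
  + move=> i; case: (eqVneq i i0) => [_|ni] //.
    case/and3P: (hC i) => u sz cy; by rewrite /is_cycle u sz ctr_cycle_e // nz1.
  + move=> i j ne x y; case: (eqVneq i i0) => [ei|ni]; case: (eqVneq j i0) => [ej|nj].
    * by subst; rewrite eqxx in ne.
    * by move=> hx hy; exact: acL j x y nj (hLm x hx) hy.
    * move=> hx hy; have [a b] := acL i y x ni (hLm y hy) hx.
      by split; rewrite 1?eq_sym 1?esym.
    * move=> hx hy. have [a b] := hA i j ne x y hx hy. split => //.
      rewrite -ctr_eq //.
      - exact: memneq (nz1 i ni).
      - exact: memneq (nz1 j nj).
      - exact: memneq (nz2 i).
      - exact: memneq (nz2 j).
- have nz1 : forall i, z1 \notin C i by move=> i; rewrite hno.
  exists C; split.
  + move=> i; case/and3P: (hC i) => u sz cy; by rewrite /is_cycle u sz ctr_cycle_e // nz1.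
  + move=> i j ne x y hx hy. have [a b] := hA i j ne x y hx hy. split => //.
    rewrite -ctr_eq //.
    - exact: memneq (nz1 i).
    - exact: memneq (nz1 j).
    - exact: memneq (nz2 i).
    - exact: memneq (nz2 j).
Qed.

Lemma ctr_hit : cycle_hitting e Z -> cycle_hitting ctr (Z :\ z2).
Proof.
move=> hH c hc. case: (boolP (z1 \in c)) => h1.
- by exists z1 => //; rewrite !inE z12 hz1.
- case/and3P: (hc) => u sz cy.
  have hc' : is_cycle e c by rewrite /is_cycle u sz ctr_cycle_e.
  have [z hz hzc] := hH c hc'.
  exists z => //. rewrite !inE hz andbT. apply: memneq hzc _. exact: ctr_cyc_z2.
Qed.


Lemma ctr_core X x0 t m : IPs e Z X x0 t -> m.+1 < size t -> nth x0 t m = z1 ->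
  nth x0 t m.+1 = z2 ->
  IPs ctr (Z :\ z2) (X :\ z2) x0 (mkseq (fun i => nth x0 t (gfun m i)) (size t).-1).
Proof.
case=> u hs he hz hf hm n1 n2.
have gl : forall i, i < (size t).-1 -> gfun m i < size t.
  by move=> i; rewrite /gfun; case: (leqP i m); lia.
have gm : forall i, gfun m i != m.+1.
  by move=> i; rewrite /gfun; case: (leqP i m) => ?; apply/eqP; lia.
have gm' : forall i, i != m -> gfun m i != m.
  by move=> i; rewrite /gfun; case: (leqP i m) => ? ?; apply/eqP; lia.
have ntz2 : forall k, k < size t -> (nth x0 t k == z2) = (k == m.+1).
  by move=> k hk; rewrite -n2 nth_uniq.
have ntz1 : forall k, k < size t -> (nth x0 t k == z1) = (k == m).
  by move=> k hk; rewrite -n1 nth_uniq // ltnW.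
split.
- rewrite /mkseq map_inj_in_uniq ?iota_uniq //.
  move=> i j; rewrite !mem_iota !add0n => /andP[_ hi] /andP[_ hj] /eqP.
  rewrite nth_uniq ?gl // /gfun; case: (leqP i m) => ?; case: (leqP j m) => ? /eqP; lia.
- apply/setP=> x; rewrite !inE -hs inE. apply/idP/idP.
  + move/(nthP x0) => [i hi <-]. rewrite size_mkseq in hi. rewrite nth_mkseq //.
    by rewrite ntz2 ?gl // gm mem_nth ?gl.
  + case/andP => xz2 xt.
    have hk : index x t < size t by rewrite index_mem.
    have hxk : nth x0 t (index x t) = x by rewrite nth_index.
    have km : index x t != m.+1 by rewrite -ntz2 // hxk.
    apply/(nthP x0). exists (if index x t <= m then index x t else (index x t).-1).
    * rewrite size_mkseq; case: (leqP (index x t) m) => ?; lia.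
    * rewrite nth_mkseq; last by case: (leqP (index x t) m) => ?; lia.
      rewrite -[in RHS]hxk /gfun; congr nth. exact: g_inv.
- move: he; rewrite !(ends_inE _ x0) size_mkseq => /and3P[h0 h1 h2].
  have s1 : 0 < (size t).-1 by lia.
  rewrite s1 !nth_mkseq //; last by lia.
  have -> : gfun m 0 = 0 by [].
  rewrite !inE h1 ntz2 // andbT /=.
  rewrite /gfun; case: (leqP (size t).-2 m) => hh.
  + have -> : (size t).-2 = m by lia.
    by rewrite n1 hz1 andbT z12.
  + have -> : ((size t).-2).+1 = (size t).-1 by lia.
    rewrite ntz2; last by lia.
    rewrite h2 andbT; apply/eqP; lia.
- exact: setSD.
- move=> i j; rewrite size_mkseq => hi hj; rewrite !nth_mkseq //.
  have hmm : gfun m m = m by rewrite /gfun leqnn.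
  have side : forall j, j < (size t).-1 -> j != m ->
      (nth x0 t (gfun m j) != z1) && (nth x0 t (gfun m j) != z2).
    by move=> k hk km; rewrite ntz1 ?gl // ntz2 ?gl // gm gm'.
  case: (eqVneq i m) => [->|im]; case: (eqVneq j m) => [->|jm].
  + by rewrite ctr_irr adjnn.
  + case/andP: (side j hj jm) => s1 s2.
    rewrite hmm n1 ctr_z1 // -{1}n1 -n2 !hf ?gl //; last by lia.
    exact: adj_gm.
  + case/andP: (side i hi im) => s1 s2.
    rewrite hmm n1 ctr_sym ctr_z1 // -{1}n1 -n2 !hf ?gl //; last by lia.
    by rewrite adj_gm // adjnC.
  + case/andP: (side i hi im) => s1 s2. case/andP: (side j hj jm) => s3 s4.
    by rewrite ctr_eq // hf ?gl // adj_g.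
Qed.

Lemma ctr_ipt X : ind_path_through e Z X -> ind_path_through ctr (Z :\ z2) (X :\ z2).
Proof.
move/(ipt_IPs z1) => [t ht]. have [u hs he hz hf] := ht.
have z1t : z1 \in t by have := subsetP hz z1 hz1; rewrite -hs inE.
have z2t : z2 \in t by have := subsetP hz z2 hz2; rewrite -hs inE.
have ha : index z1 t < size t by rewrite index_mem.
have hb : index z2 t < size t by rewrite index_mem.
have na : nth z1 t (index z1 t) = z1 by rewrite nth_index.
have nb : nth z1 t (index z2 t) = z2 by rewrite nth_index.
have hab : adjn (index z1 t) (index z2 t) by rewrite -hf // na nb.
case/orP: hab => [/eqP ab | /eqP ba].
- apply: IPs_ipt (ctr_core ht _ na _); first by rewrite ab.
  by rewrite ab.
- have ht' := IPs_rev ht.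
  apply: IPs_ipt (ctr_core (m := size t - (index z1 t).+1) ht' _ _ _).
  + rewrite size_rev; lia.
  + rewrite nth_rev; last by lia.
    have -> : size t - (size t - (index z1 t).+1).+1 = index z1 t by lia.
    by [].
  + rewrite nth_rev; last by rewrite ?size_rev; lia.
    have -> : size t - (size t - (index z1 t).+1).+2 = index z2 t by lia.
    by [].
Qed.

Lemma ctr_n : n_paths e Z <= n_paths ctr (Z :\ z2).
Proof.
rewrite /n_paths -(@card_in_imset _ _ (fun X => X :\ z2)).
- apply: subset_leq_card. apply/subsetP => Y /imsetP [X]; rewrite inE => hX ->.
  rewrite inE. exact: ctr_ipt.
- move=> X Y; rewrite !inE => hX hY /= eq.
  have z2X : z2 \in X by apply: (subsetP (ipt_sub hX)).
  have z2Y : z2 \in Y by apply: (subsetP (ipt_sub hY)).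
  by rewrite -(setD1K z2X) eq setD1K.
Qed.

End Contr.

Lemma phase1 s k : forall (e : rel T) (Z : {set T}), #|Z| <= k -> symmetric e ->
  irreflexive e -> plantation e s Z ->
  exists (e' : rel T) (Z' : {set T}), [/\ symmetric e', irreflexive e', plantation e' s Z',
    stable e' Z' & #|Z'| <= #|Z| /\ n_paths e Z <= n_paths e' Z'].
Proof.
elim: k => [|k IH] e Z hk es ei [hF hH].
- exists e, Z; split => //.
  move=> x y hx; move: hk; rewrite leqn0 => /eqP/cards0_eq Z0.
  by rewrite Z0 inE in hx.
- case: (boolP [exists x : T * T, [&& x.1 \in Z, x.2 \in Z & e x.1 x.2]]) =>
    [/existsP [[z1 z2] /and3P [h1 h2 h12]] | hno].
  + have hZ' : #|Z :\ z2| <= k by move: hk; rewrite (cardsD1 z2 Z) h2.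
    have cs : symmetric (ctr e z1 z2) by apply: ctr_sym.
    have ci : irreflexive (ctr e z1 z2) by apply: ctr_irr.
    have cp : plantation (ctr e z1 z2) s (Z :\ z2).
      split; [apply: ctr_sO | apply: ctr_hit] => //.
    have [e' [Z' [a b c d [f g]]]] := IH _ _ hZ' cs ci cp.
    exists e', Z'; split => //; split.
    * apply: leq_trans f _. apply: subset_leq_card. exact: subsetDl.
    * apply: leq_trans g. exact: ctr_n.
  + exists e, Z; split => //.
    move=> x y hx hy. apply: contraNN hno => hxy. apply/existsP; exists (x, y).
    by rewrite /= hx hy.
Qed.

Lemma ipt_elem r (Z X : {set T}) : ind_path_through r Z X -> exists x0 : T, true.
Proof.
move/existsP => [t /and5P [_ _ he _ _]]. move: he; case: (tval t) => [|x r'] //.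
all: try by exists x.
Qed.

Section Del.
Variables (e : rel T) (esym : symmetric e) (eirr : irreflexive e) (Z : {set T}).

Definition bad := [set v | (v \notin Z) && (2 < #|[set z in Z | e v z]|)].
Definition del : rel T := fun x y => [&& x \notin bad, y \notin bad & e x y].

Lemma del_sym : symmetric del.
Proof. by move=> x y; rewrite /del esym andbCA. Qed.

Lemma del_irr : irreflexive del.
Proof. by move=> x; rewrite /del eirr !andbF. Qed.

Lemma del_cycle c : cycle del c -> cycle e c /\ forall x, x \in c -> x \notin bad.
Proof.
move=> hc.
have hb : forall x, x \in c -> x \notin bad.
  by move=> x hx; have := next_cycle hc hx; case/andP.
split => //.
rewrite -(@eq_in_cycle _ [pred x | x \notin bad] del e) //.
- by move=> x y hx hy; rewrite /del (hx : x \notin bad) (hy : y \notin bad).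
- by apply/allP => x hx; exact: hb.
Qed.

Lemma del_plant s : plantation e s Z -> plantation del s Z.
Proof.
move=> [hF hH]; split.
- move=> [C [hC hA]]; apply: hF; exists C; split.
  + move=> i; case/and3P: (hC i) => u sz cy. by rewrite /is_cycle u sz (del_cycle cy).1.
  + move=> i j ne x y hx hy. have [a b] := hA i j ne x y hx hy. split => //.
    case/and3P: (hC i) => _ _ /del_cycle [_ bi].
    case/and3P: (hC j) => _ _ /del_cycle [_ bj].
    by move: b; rewrite /del (bi x hx) (bj y hy).
- move=> c /and3P [u sz cy]. apply: hH. by rewrite /is_cycle u sz (del_cycle cy).1.
Qed.

Lemma del_stable : stable e Z -> stable del Z.
Proof. by move=> h x y hx hy; rewrite /del (negbTE (h x y hx hy)) !andbF. Qed.

Lemma del_dyadic : stable e Z -> dyadic del Z.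
Proof.
move=> h; split; first exact: del_stable.
move=> v hv. case: (boolP (v \in bad)) => hb.
- have -> : [set z in Z | del v z] = set0.
    by apply/setP => z; rewrite !inE /del hb /= andbF.
  by rewrite cards0.
- apply: leq_trans (_ : #|[set z in Z | e v z]| <= 2).
  + apply: subset_leq_card. apply/subsetP => z; rewrite !inE => /andP[-> /and3P[_ _ ->]].
    by [].
  + move: hb; rewrite inE negb_and hv /= -leqNgt. by [].
Qed.

Lemma del_IPs X x0 t : IPs e Z X x0 t -> IPs del Z X x0 t.
Proof.
case=> u hs he hz hf; split => //.
have nb : forall k, k < size t -> nth x0 t k \notin bad.
  move=> k hk; rewrite inE negb_and -leqNgt orbC; apply/orP; left.
  apply: leq_trans (_ : #|[set nth x0 t k.-1; nth x0 t k.+1]| <= 2); last first.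
    by rewrite cards2; case: (_ != _).
  apply: subset_leq_card; apply/subsetP => z; rewrite !inE => /andP[zZ ez].
  have zt : z \in t by have := subsetP hz z zZ; rewrite -hs inE.
  have hj : index z t < size t by rewrite index_mem.
  have nj : nth x0 t (index z t) = z by rewrite nth_index.
  move: ez; rewrite -{1}nj hf // /adjn => /orP[] /eqP hh.
  + by rewrite hh nj eqxx orbT.
  + by rewrite -hh /= nj eqxx.
move=> i j hi hj; rewrite /del (nb i hi) (nb j hj) /=. exact: hf.
Qed.

Lemma del_n : n_paths e Z <= n_paths del Z.
Proof.
apply: subset_leq_card; apply/subsetP => X; rewrite !inE => hX.
have [x0 _] := ipt_elem hX.
have [t ht] := ipt_IPs x0 hX.
exact: IPs_ipt (del_IPs ht).
Qed.

End Del.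
End S.

Theorem mainTheorem16 (s : nat) (hs : 1 <= s)
  (T : finType) (e : rel T) (esym : symmetric e) (eirr : irreflexive e)
  (Z : {set T}) (hZ : plantation e s Z) :
  exists (T' : finType) (e' : rel T') (Z' : {set T'}),
    [/\ symmetric e', irreflexive e', plantation e' s Z' & dyadic e' Z'] /\
    [/\ #|T'| <= #|T|, #|Z'| <= #|Z| & n_paths e Z <= n_paths e' Z'].
Proof.
have [e1 [Z1 [a b c d [f g]]]] := phase1 (leqnn #|Z|) esym eirr hZ.
exists T, (del e1 Z1), Z1; split; split => //.
- exact: del_sym.
- exact: del_irr.
- exact: del_plant.
- exact: del_dyadic.
- exact: leq_trans g (del_n _ _).
Qed.
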